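(* If $B\ge0.287$, then the maximum of $x\mapsto|\Delta(x+iB)|$ over $x\in[-\tfrac12,\tfrac12]$ is attained at $x=\tfrac12$ (and, by symmetry, at $x=-\tfrac12$).
   Context: $q=e^{2\pi iz}$ and $\Delta(z)=q\prod_{n\ge1}(1-q^n)^{24}$ is the modular discriminant. *)

(* Defs.v *)
From Stdlib Require Import Reals.
From Coquelicot Require Import Coquelicot.
Open Scope R_scope.

Definition cexp (w : C) : C := (exp (Re w) * cos (Im w), exp (Re w) * sin (Im w)).

Definition qvar (z : C) : C := cexp (Cmult (RtoC (2 * PI)) (Cmult Ci z)).

Fixpoint eta_partial (q : C) (N : nat) : C :=
  match N with
  | O => RtoC 1
  | S m => Cmult (eta_partial q m) (Cpow (Cminus (RtoC 1) (Cpow q (S m))) 24)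
  end.

Definition infprod (q : C) : C :=
  (real (Lim_seq (fun N => fst (eta_partial q N))),
   real (Lim_seq (fun N => snd (eta_partial q N)))).

Definition modDelta (z : C) : C := Cmult (qvar z) (infprod (qvar z)).

(* Main.v *)
Require Import Defs.
From Stdlib Require Import Reals Lra Psatz.
From Coquelicot Require Import Coquelicot.
Open Scope R_scope.
Lemma PI_gt : 309/100 <= PI.
Proof.
  destruct (PI_ineq 10) as [H _].
  unfold tg_alt, PI_tg in H. simpl in H.
  rewrite ?S_INR, ?plus_INR, ?mult_INR in H. simpl in H.
  lra.
Qed.

Lemma sq_le (l x : R) : 0 <= l <= x -> l * l <= x * x.
Proof. intros; nra. Qed.

Lemma exp_double (z : R) : exp (2*z) = exp z * exp z.
Proof. rewrite <- exp_plus; f_equal; ring. Qed.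

Lemma exp_big (y : R) : 17736/10000 <= y -> 40/7 <= exp y.
Proof.
  intros Hy.
  set (z := y/128).
  assert (E : y = 2*(2*(2*(2*(2*(2*(2*z))))))) by (unfold z; field).
  rewrite E. rewrite !exp_double.
  assert (H0 : 101385/100000 <= exp z).
  { pose proof (exp_ineq1_le z). unfold z in *. lra. }
  assert (H1 : 102789/100000 <= exp z * exp z).
  { pose proof (sq_le (101385/100000) (exp z)). lra. }
  set (e1 := exp z * exp z) in *.
  assert (H2 : 105655/100000 <= e1 * e1) by (pose proof (sq_le (102789/100000) e1); lra).
  set (e2 := e1 * e1) in *.
  assert (H3 : 111629/100000 <= e2 * e2) by (pose proof (sq_le (105655/100000) e2); lra).
  set (e3 := e2 * e2) in *.
  assert (H4 : 124610/100000 <= e3 * e3) by (pose proof (sq_le (111629/100000) e3); lra).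
  set (e4 := e3 * e3) in *.
  assert (H5 : 155276/100000 <= e4 * e4) by (pose proof (sq_le (124610/100000) e4); lra).
  set (e5 := e4 * e4) in *.
  assert (H6 : 241106/100000 <= e5 * e5) by (pose proof (sq_le (155276/100000) e5); lra).
  set (e6 := e5 * e5) in *.
  pose proof (sq_le (241106/100000) e6). lra.
Qed.

Lemma r_bound (B : R) : 287/1000 <= B -> 0 < exp (-(2*PI*B)) <= 7/40.
Proof.
  intros HB. split; [apply exp_pos|].
  pose proof PI_gt.
  assert (Hb : 40/7 <= exp (2*PI*B)) by (apply exp_big; nra).
  rewrite exp_Ropp.
  assert (0 < exp (2*PI*B)) by apply exp_pos.
  apply (Rmult_le_reg_l (exp (2*PI*B))); auto.
  rewrite Rinv_r by lra. lra.
Qed.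

Lemma box (r u r0 r1 u0 u1 m : R) :
  0 <= r0 <= r -> r <= r1 -> 0 <= u0 <= u -> u <= u1 -> 0 <= m <= (2*u-3)^2 ->
  0 <= 1 - 2*r1*u1 ->
  -(144/100) + (43/10)*r1*(2-u0) + 50*r1^3 - (19/10)*r0^2*(1-2*r1*u1)*m < 0 ->
  u1 <= 2 ->
  -(144/100) + (43/10)*r*(2-u) - (1-2*r*u)*(19/10)*r^2*(2*u-3)^2 + 50*r^3 <= 0.
Proof.
  intros Hr0 Hr1 Hu0 Hu1 Hm Hp Hc Hu2.
  assert (A1 : r*(2-u) <= r1*(2-u0)) by nra.
  assert (A2 : r^3 <= r1^3) by (apply pow_incr; lra).
  assert (A3 : r0^2 <= r^2) by (apply pow_incr; lra).
  assert (A4 : 0 <= 1 - 2*r1*u1 <= 1-2*r*u) by nra.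
  assert (A5 : r0^2*(1-2*r1*u1) <= r^2*(1-2*r*u)).
  { apply Rmult_le_compat; try lra. apply pow_le; lra. }
  assert (A6 : r0^2*(1-2*r1*u1)*m <= r^2*(1-2*r*u)*(2*u-3)^2).
  { apply Rmult_le_compat; try lra. apply Rmult_le_pos; try lra. apply pow_le; lra. }
  nra.
Qed.

Lemma bracket (r u : R) : 0 <= r <= 7/40 -> 0 <= u <= 2 ->
  -(144/100) + (43/10)*r*(2-u) - (1-2*r*u)*(19/10)*r^2*(2*u-3)^2 + 50*r^3 <= 0.
Proof.
  intros Hr Hu.
  destruct (Rle_lt_dec r (14/100)).
  { apply (box r u 0 (7/50) 0 (2/1) 0); try lra; split; [lra|apply pow2_ge_0]. }
  destruct (Rle_lt_dec r (1575/10000)).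
  {
  destruct (Rle_lt_dec u (1/10)).  { apply (box r u (7/50) (63/400) 0 (1/10) (196/25)); try lra. split; [lra|]. nra. }
  destruct (Rle_lt_dec u (2/10)).  { apply (box r u (7/50) (63/400) (1/10) (1/5) (169/25)); try lra. split; [lra|]. nra. }
  destruct (Rle_lt_dec u (3/10)).  { apply (box r u (7/50) (63/400) (1/5) (3/10) (144/25)); try lra. split; [lra|]. nra. }
  destruct (Rle_lt_dec u (4/10)).  { apply (box r u (7/50) (63/400) (3/10) (2/5) (121/25)); try lra. split; [lra|]. nra. }
  destruct (Rle_lt_dec u (5/10)).  { apply (box r u (7/50) (63/400) (2/5) (1/2) (4/1)); try lra. split; [lra|]. nra. }
  destruct (Rle_lt_dec u (6/10)).  { apply (box r u (7/50) (63/400) (1/2) (3/5) (81/25)); try lra. split; [lra|]. nra. }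
  destruct (Rle_lt_dec u (7/10)).  { apply (box r u (7/50) (63/400) (3/5) (7/10) (64/25)); try lra. split; [lra|]. nra. }
  destruct (Rle_lt_dec u (8/10)).  { apply (box r u (7/50) (63/400) (7/10) (4/5) (49/25)); try lra. split; [lra|]. nra. }
  destruct (Rle_lt_dec u (9/10)).  { apply (box r u (7/50) (63/400) (4/5) (9/10) (36/25)); try lra. split; [lra|]. nra. }
  destruct (Rle_lt_dec u (10/10)).  { apply (box r u (7/50) (63/400) (9/10) (1/1) (1/1)); try lra. split; [lra|]. nra. }
  apply (box r u (7/50) (63/400) (1/1) (2/1) 0); try lra; split; [lra|apply pow2_ge_0]. }
  {
  destruct (Rle_lt_dec u (1/10)).  { apply (box r u (63/400) (7/40) 0 (1/10) (196/25)); try lra. split; [lra|]. nra. }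
  destruct (Rle_lt_dec u (2/10)).  { apply (box r u (63/400) (7/40) (1/10) (1/5) (169/25)); try lra. split; [lra|]. nra. }
  destruct (Rle_lt_dec u (3/10)).  { apply (box r u (63/400) (7/40) (1/5) (3/10) (144/25)); try lra. split; [lra|]. nra. }
  destruct (Rle_lt_dec u (4/10)).  { apply (box r u (63/400) (7/40) (3/10) (2/5) (121/25)); try lra. split; [lra|]. nra. }
  destruct (Rle_lt_dec u (5/10)).  { apply (box r u (63/400) (7/40) (2/5) (1/2) (4/1)); try lra. split; [lra|]. nra. }
  destruct (Rle_lt_dec u (6/10)).  { apply (box r u (63/400) (7/40) (1/2) (3/5) (81/25)); try lra. split; [lra|]. nra. }
  destruct (Rle_lt_dec u (7/10)).  { apply (box r u (63/400) (7/40) (3/5) (7/10) (64/25)); try lra. split; [lra|]. nra. }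
  destruct (Rle_lt_dec u (8/10)).  { apply (box r u (63/400) (7/40) (7/10) (4/5) (49/25)); try lra. split; [lra|]. nra. }
  destruct (Rle_lt_dec u (9/10)).  { apply (box r u (63/400) (7/40) (4/5) (9/10) (36/25)); try lra. split; [lra|]. nra. }
  destruct (Rle_lt_dec u (10/10)).  { apply (box r u (63/400) (7/40) (9/10) (1/1) (1/1)); try lra. split; [lra|]. nra. }
  apply (box r u (63/400) (7/40) (1/1) (2/1) 0); try lra; split; [lra|apply pow2_ge_0]. }
Qed.

Lemma core (r u a b d : R) : 0 < r <= 7/40 -> 0 <= u <= 2 ->
  144/100*r <= a <= 2*r -> 0 <= b <= 43/10*r^2 -> 19/10*r^3 <= d ->
  (1 - a*u) * (1 + b*(u*(2-u))) * (1 - d*(u*(2*u-3)^2)) <= 1 - (50*r^4)*u.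
Proof.
  intros Hr Hu Ha Hb Hd.
  set (X := 1 - a*u). set (W := u*(2-u)). set (V := u*(2*u-3)^2).
  assert (HW : 0 <= W) by (unfold W; nra).
  assert (HV : 0 <= V) by (unfold V; apply Rmult_le_pos; [lra|apply pow2_ge_0]).
  assert (HX : 1 - 2*r*u <= X <= 1) by (unfold X; nra).
  assert (HX0 : 0 <= 1 - 2*r*u) by nra.
  assert (HY : 1 <= 1 + b*W) by nra.
  assert (HD : 19/10*r^3*V <= d*V) by nra.
  assert (S1 : X*(1+b*W)*(1-d*V) <= X*(1+b*W) - X*(d*V)).
  { assert (0 <= r^3) by (apply pow_le; lra). assert (0 <= d*V) by (apply Rmult_le_pos; lra).
    assert (0 <= b*W) by (apply Rmult_le_pos; lra).
    assert (0 <= X*(d*V)*(b*W)) by (apply Rmult_le_pos; [apply Rmult_le_pos|]; lra).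
    assert (X*(1+b*W)*(1-d*V) = X*(1+b*W) - X*(d*V) - X*(d*V)*(b*W)) by ring. lra. }
  assert (S2 : X*(1+b*W) <= X + b*W) by nra.
  assert (S3 : (1-2*r*u)*(19/10*r^3*V) <= X*(d*V)).
  { assert (0 <= r^3) by (apply pow_le; lra).
    apply Rmult_le_compat; [lra| apply Rmult_le_pos; lra | lra | lra]. }
  assert (S4 : b*W <= 43/10*r^2*W) by nra.
  pose proof (bracket r u ltac:(lra) Hu) as Br.
  assert (E : 1 - 144/100*r*u + 43/10*r^2*W - (1-2*r*u)*(19/10*r^3*V)
             = 1 + u*r*(-(144/100) + (43/10)*r*(2-u) - (1-2*r*u)*(19/10)*r^2*(2*u-3)^2 + 50*r^3) - 50*r^4*u)
    by (unfold W, V; ring).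
  assert (F : u*r*(-(144/100) + (43/10)*r*(2-u) - (1-2*r*u)*(19/10)*r^2*(2*u-3)^2 + 50*r^3) <= 0).
  { assert (0 <= u*r) by nra. nra. }
  unfold X in *. nra.
Qed.

Lemma base_poly (r c : R) : 0 < r <= 7/40 -> -1 <= c <= 1 ->
  (1 - 2*r*c + r^2) * (1 - 2*r^2*(2*c^2-1) + r^4) * (1 - 2*r^3*(4*c^3-3*c) + r^6)
  <= (1+r)^2 * (1-r^2)^2 * (1+r^3)^2 * (1 - (1+c)*(50*r^4)).
Proof.
  intros Hr Hc.
  set (u := 1 + c).
  set (p1 := (1+r)^2). set (p2 := (1-r^2)^2). set (p3 := (1+r^3)^2).
  assert (Hp1 : 1 <= p1 <= 1381/1000) by (unfold p1; nra).
  assert (Hp2 : 935/1000 <= p2 <= 1).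
  { unfold p2. assert (0 <= r^2 <= 49/1600) by nra. nra. }
  assert (Hp3 : 1 <= p3 <= 105/100).
  { unfold p3. assert (0 <= r^3 <= 343/64000) by nra. nra. }
  assert (I1 : 1000/1381 <= /p1 <= 1).
  { split. replace (1000/1381) with (/(1381/1000)) by field. apply Rinv_le_contravar; lra.
    rewrite <- Rinv_1; apply Rinv_le_contravar; lra. }
  assert (I2 : 0 <= /p2 <= 1000/935).
  { split. left; apply Rinv_0_lt_compat; lra.
    replace (1000/935) with (/(935/1000)) by field. apply Rinv_le_contravar; lra. }
  assert (I3 : 100/105 <= /p3).
  { replace (100/105) with (/(105/100)) by field. apply Rinv_le_contravar; lra. }
  set (a := 2*r/p1). set (b := 4*r^2/p2). set (d := 2*r^3/p3).
  assert (E1 : 1 - 2*r*c + r^2 = p1 * (1 - a*u)) by (unfold a, p1, u; field; nra).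
  assert (E2 : 1 - 2*r^2*(2*c^2-1) + r^4 = p2 * (1 + b*(u*(2-u)))) by (unfold b, p2, u; field; nra).
  assert (E3 : 1 - 2*r^3*(4*c^3-3*c) + r^6 = p3 * (1 - d*(u*(2*u-3)^2))) by (unfold d, p3, u; field; nra).
  rewrite E1, E2, E3.
  assert (0 <= r^2) by (apply pow_le; lra). assert (0 <= r^3) by (apply pow_le; lra).
  assert (Ha : 144/100*r <= a <= 2*r) by (unfold a, Rdiv; nra).
  assert (Hb : 0 <= b <= 43/10*r^2) by (unfold b, Rdiv; nra).
  assert (Hd : 19/10*r^3 <= d) by (unfold d, Rdiv; nra).
  pose proof (core r u a b d Hr ltac:(unfold u; lra) Ha Hb Hd) as K.
  assert (0 < p1*p2*p3) by (apply Rmult_lt_0_compat; [apply Rmult_lt_0_compat|]; lra).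
  replace (p1 * (1 - a * u) * (p2 * (1 + b * (u * (2 - u)))) * (p3 * (1 - d * (u * (2 * u - 3) ^ 2))))
    with ((p1*p2*p3) * ((1 - a * u) * (1 + b * (u * (2 - u))) * (1 - d * (u * (2 * u - 3) ^ 2)))) by ring.
  apply Rmult_le_compat_l; lra.
Qed.

Definition Pn (r t : R) (n : nat) := 1 - 2 * r^n * cos (INR n * t) + r^(2*n).
Fixpoint prodP (r t : R) (N : nat) : R :=
  match N with O => 1 | S m => prodP r t m * Pn r t (S m) end.

Lemma sin_mult_bound (n : nat) (y : R) : Rabs (sin (INR n * y)) <= INR n * Rabs (sin y).
Proof.
  induction n as [|n IH].
  - simpl. rewrite Rmult_0_l, sin_0, Rabs_R0. lra.
  - rewrite S_INR. replace ((INR n + 1) * y) with (INR n * y + y) by ring.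
    rewrite sin_plus.
    pose proof (Rabs_triang (sin (INR n * y) * cos y) (cos (INR n * y) * sin y)).
    rewrite !Rabs_mult in H.
    pose proof (COS_bound y). pose proof (COS_bound (INR n * y)).
    assert (Rabs (cos y) <= 1) by (apply Rabs_le; lra).
    assert (Rabs (cos (INR n * y)) <= 1) by (apply Rabs_le; lra).
    pose proof (Rabs_pos (sin (INR n * y))). pose proof (Rabs_pos (sin y)).
    nra.
Qed.

Lemma one_minus_cos (n : nat) (p : R) : 1 - cos (INR n * p) <= (INR n)^2 * (1 - cos p).
Proof.
  pose proof (sin_mult_bound n (p/2)) as H.
  replace (INR n * p) with (2 * (INR n * (p/2))) by field.
  replace p with (2 * (p/2)) at 2 by field.
  rewrite !cos_2a_sin.
  assert (Sq : forall x, x*x = Rabs x * Rabs x).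
  { intro x. rewrite <- Rabs_mult. symmetry. apply Rabs_right.
    pose proof (Rle_0_sqr x). unfold Rsqr in *. lra. }
  replace (2 * sin (INR n * (p / 2)) * sin (INR n * (p / 2))) with (2 * (sin (INR n * (p / 2)) * sin (INR n * (p / 2)))) by ring.
  replace (2 * sin (p / 2) * sin (p / 2)) with (2 * (sin (p / 2) * sin (p / 2))) by ring.
  rewrite (Sq (sin (INR n * (p/2)))), (Sq (sin (p/2))).
  pose proof (Rabs_pos (sin (INR n * (p/2)))). pose proof (pos_INR n).
  assert (Rabs (sin (INR n * (p/2))) * Rabs (sin (INR n * (p/2)))
          <= (INR n * Rabs (sin (p/2))) * (INR n * Rabs (sin (p/2)))) by (apply Rmult_le_compat; lra).
  nra.
Qed.

Lemma sin_npi (n : nat) : sin (INR n * PI) = 0.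
Proof.
  induction n as [|n IH].
  - simpl. rewrite Rmult_0_l. apply sin_0.
  - rewrite S_INR, Rmult_plus_distr_r, Rmult_1_l, sin_plus, IH, sin_PI. ring.
Qed.

Lemma step_cos (n : nat) (t : R) : cos (INR n * PI) - cos (INR n * t) <= (INR n)^2 * (1 + cos t).
Proof.
  set (p := t - PI).
  replace (INR n * t) with (INR n * p + INR n * PI) by (unfold p; ring).
  rewrite cos_plus, sin_npi.
  assert (Ep : cos p = - cos t) by (unfold p; rewrite cos_minus, cos_PI, sin_PI; ring).
  pose proof (one_minus_cos n p). rewrite Ep in H.
  pose proof (COS_bound (INR n * PI)). pose proof (COS_bound (INR n * p)).
  nra.
Qed.

Lemma pow2n (r : R) (n : nat) : r^(2*n) = r^n * r^n.
Proof. replace (2*n)%nat with (n+n)%nat by lia. apply pow_add. Qed.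

Lemma Pn_nonneg (r t : R) (n : nat) : 0 <= r -> (1 - r^n)^2 <= Pn r t n.
Proof.
  intros Hr. unfold Pn. rewrite pow2n. pose proof (COS_bound (INR n * t)).
  assert (0 <= r^n) by (apply pow_le; lra). nra.
Qed.

Lemma Pn_step (r t : R) (n : nat) : 0 <= r ->
  Pn r t n <= Pn r PI n + 2 * (INR n)^2 * r^n * (1 + cos t).
Proof.
  intros Hr. unfold Pn. pose proof (step_cos n t).
  assert (0 <= r^n) by (apply pow_le; lra). nra.
Qed.

Lemma prodP_nonneg (r t : R) (N : nat) : 0 <= r -> 0 <= prodP r t N.
Proof.
  intros Hr. induction N as [|N IH]; simpl; [lra|].
  apply Rmult_le_pos; auto. pose proof (Pn_nonneg r t (S N) Hr).
  pose proof (pow2_ge_0 (1 - r^(S N))). lra.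
Qed.

Definition beta (r : R) (n : nat) := 2 * (INR n)^2 * r^n / (1 - r^4)^2.

Lemma cos2 (t : R) : cos (2*t) = 2 * cos t ^ 2 - 1.
Proof. rewrite cos_2a_cos. ring. Qed.
Lemma cos3 (t : R) : cos (3*t) = 4 * cos t ^ 3 - 3 * cos t.
Proof.
  replace (3*t) with (2*t + t) by ring. rewrite cos_plus, cos2, sin_2a.
  pose proof (sin2_cos2 t). unfold Rsqr in H.
  replace (2 * sin t * cos t * sin t) with (2 * cos t * (sin t * sin t)) by ring.
  replace (sin t * sin t) with (1 - cos t * cos t) by lra. ring.
Qed.

Lemma prod_inv (r t : R) : 0 < r <= 7/40 -> forall N,
  exists T, 0 <= T /\ T + beta r (N+4) / (1 - 2*r) <= 50*r^4 /\
    prodP r t (N+3) <= prodP r PI (N+3) * (1 - (1 + cos t) * (50*r^4 - T)).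
Proof.
  intros Hr.
  assert (Hr4 : 0 <= r^4 <= 1/1000).
  { split; [apply pow_le; lra|]. assert (r^4 <= (7/40)^4) by (apply pow_incr; lra). lra. }
  assert (Hq : 998/1000 <= (1 - r^4)^2) by (replace ((1-r^4)^2) with (1 - 2*r^4 + r^4*r^4) by ring; pose proof (Rle_0_sqr (r^4)); unfold Rsqr in *; lra).
  assert (Hq0 : 0 < (1 - r^4)^2) by lra.
  pose proof (COS_bound t) as Hc.
  induction N as [|N IH].
  - exists 0. split; [lra|]. split.
    + unfold beta. simpl (0+4)%nat. rewrite Rplus_0_l.
      replace (INR 4) with 4 by (simpl; ring).
      unfold Rdiv. rewrite Rmult_assoc.
      apply Rle_trans with (2 * 4^2 * r^4 * (1000/998 * (100/65))); [|nra].
      apply Rmult_le_compat_l; [nra|].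
      rewrite <- Rinv_mult.
      replace (1000/998 * (100/65)) with (/ (998/1000 * (65/100))) by field.
      apply Rinv_le_contravar; [nra|].
      apply Rmult_le_compat; lra.
    + simpl prodP. unfold Pn. simpl INR.
      replace ((1+1) * t) with (2*t) by ring. replace ((1+1+1) * t) with (3*t) by ring.
      replace ((1+1) * PI) with (2*PI) by ring. replace ((1+1+1) * PI) with (3*PI) by ring.
      rewrite !Rmult_1_l, !cos2, !cos3, cos_PI.
      pose proof (base_poly r (cos t) Hr Hc).
      rewrite Rminus_0_r.
      replace (r^(2*1)) with (r^2) by (simpl; ring).
      replace (r^(2*2)) with (r^4) by (simpl; ring).
      replace (r^(2*3)) with (r^6) by (simpl; ring).
      match goal with |- ?L <= ?R => replace L with
        ((1 - 2*r*cos t + r^2) * (1 - 2*r^2*(2*cos t^2-1) + r^4) * (1 - 2*r^3*(4*cos t^3-3*cos t) + r^6)) by ring;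
        replace R with ((1+r)^2 * (1-r^2)^2 * (1+r^3)^2 * (1 - (1+cos t)*(50*r^4))) by ring end.
      exact H.
  - destruct IH as [T [HT0 [HT1 HT2]]].
    set (n := (N + 4)%nat) in *.
    assert (En : (S N + 3)%nat = n) by (unfold n; lia).
    assert (En' : (S N + 4)%nat = S n) by (unfold n; lia).
    assert (En3 : (N + 3)%nat = pred n) by (unfold n; lia).
    exists (T + beta r n).
    assert (Hn4 : 4 <= INR n) by (unfold n; rewrite plus_INR; simpl; pose proof (pos_INR N); lra).
    assert (Hb0 : 0 <= beta r n).
    { unfold beta, Rdiv. apply Rmult_le_pos; [|left; apply Rinv_0_lt_compat; lra].
      assert (0 <= r^n) by (apply pow_le; lra). nra. }
    assert (Hbs : beta r (S n) <= 2*r*beta r n).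
    { unfold beta, Rdiv. rewrite S_INR. change (r^(S n)) with (r*r^n).
      assert (0 <= r^n) by (apply pow_le; lra).
      assert (0 < /(1-r^4)^2) by (apply Rinv_0_lt_compat; lra).
      assert ((INR n + 1)^2 <= 2 * INR n ^2) by nra.
      assert (0 <= r * (r^n * / (1 - r^4)^2)) by (apply Rmult_le_pos; [lra|apply Rmult_le_pos; lra]).
      set (W := r * (r^n * / (1 - r^4)^2)) in *.
      replace (2 * (INR n + 1) ^ 2 * (r * r ^ n) * / (1 - r ^ 4) ^ 2) with (2 * (INR n + 1) ^ 2 * W) by (unfold W; ring).
      replace (2 * r * (2 * INR n ^ 2 * r ^ n * / (1 - r ^ 4) ^ 2)) with (2 * (2 * INR n ^ 2) * W) by (unfold W; ring).
      apply Rmult_le_compat_r; lra. }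
    split; [lra|]. split.
    + rewrite En'.
      assert (beta r n / (1-2*r) = beta r n + 2*r*beta r n / (1-2*r)) by (field; lra).
      assert (beta r (S n) / (1-2*r) <= 2*r*beta r n / (1-2*r)).
      { unfold Rdiv. apply Rmult_le_compat_r; [left; apply Rinv_0_lt_compat; lra|lra]. }
      lra.
    + rewrite En. rewrite En3 in HT2.
      replace n with (S (pred n)) at 1 2 by (unfold n; lia).
      simpl prodP. replace (S (pred n)) with n by (unfold n; lia).
      set (A := prodP r t (pred n)) in *. set (D := prodP r PI (pred n)) in *.
      assert (HA : 0 <= A) by (apply prodP_nonneg; lra).
      assert (HD : 0 <= D) by (apply prodP_nonneg; lra).
      set (u := 1 + cos t) in *.
      assert (Hu : 0 <= u <= 2) by (unfold u; lra).
      pose proof (Pn_step r t n ltac:(lra)) as Hs. fold u in Hs.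
      pose proof (Pn_nonneg r PI n ltac:(lra)) as Hp.
      assert (Hrn : 0 <= r^n <= r^4).
      { split; [apply pow_le; lra|]. replace n with (4 + N)%nat by (unfold n; lia).
        rewrite pow_add. assert (r^N <= 1^N) by (apply pow_incr; lra). rewrite pow1 in *. assert (0 <= r^N) by (apply pow_le; lra).
        nra. }
      assert (Hp4 : (1 - r^4)^2 <= Pn r PI n) by nra.
      set (p := Pn r PI n) in *.
      assert (Ha : 2 * INR n ^2 * r^n <= p * beta r n).
      { unfold beta. assert (0 <= 2 * INR n ^2 * r^n) by nra.
        apply Rle_trans with ((1-r^4)^2 * (2 * INR n ^ 2 * r ^ n / (1 - r ^ 4) ^ 2)).
        - right. field. lra.
        - apply Rmult_le_compat_r; [|lra]. unfold Rdiv. apply Rmult_le_pos; [lra|left; apply Rinv_0_lt_compat; lra]. }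
      assert (Hpt : Pn r t n <= p * (1 + beta r n * u)) by nra.
      assert (Hpt0 : 0 <= Pn r t n) by (pose proof (Pn_nonneg r t n ltac:(lra)); pose proof (pow2_ge_0 (1 - r^n)); lra).
      assert (Hp0 : 0 <= p) by nra.
      assert (HTK : T <= 50*r^4).
      { assert (0 <= beta r n / (1 - 2*r)).
        { unfold Rdiv. apply Rmult_le_pos; [lra|left; apply Rinv_0_lt_compat; lra]. }
        lra. }
      apply Rle_trans with (A * (p * (1 + beta r n * u))); [apply Rmult_le_compat_l; lra|].
      apply Rle_trans with (D * (1 - u * (50 * r ^ 4 - T)) * (p * (1 + beta r n * u))).
      { assert (0 <= beta r n * u) by (apply Rmult_le_pos; lra).
        apply Rmult_le_compat_r; [|lra]. apply Rmult_le_pos; lra. }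
      assert (0 <= D * p) by (apply Rmult_le_pos; lra).
      assert (0 <= u*u*beta r n*(50*r^4 - T)) by (apply Rmult_le_pos; [apply Rmult_le_pos; [apply Rmult_le_pos|]|]; lra).
      replace (D * (1 - u * (50 * r ^ 4 - T)) * (p * (1 + beta r n * u)))
        with (D * p * (1 - u * (50 * r ^ 4 - (T + beta r n))) - D*p*(u*u*beta r n*(50*r^4 - T))) by ring.
      assert (0 <= D*p*(u*u*beta r n*(50*r^4 - T))) by (apply Rmult_le_pos; lra).
      lra.
Qed.

Lemma prod_le (r t : R) : 0 < r <= 7/40 -> forall N, prodP r t (N+3) <= prodP r PI (N+3).
Proof.
  intros Hr N. destruct (prod_inv r t Hr N) as [T [H0 [H1 H2]]].
  pose proof (COS_bound t).
  assert (r^4 <= (7/40)^4) by (apply pow_incr; lra).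
  assert (0 < (1-r^4)^2) by (apply pow_lt; lra).
  assert (0 <= beta r (N+4) / (1-2*r)).
  { unfold beta, Rdiv. apply Rmult_le_pos; [|left; apply Rinv_0_lt_compat; lra].
    apply Rmult_le_pos; [|left; apply Rinv_0_lt_compat; lra].
    assert (0 <= r^(N+4)) by (apply pow_le; lra). pose proof (pos_INR (N+4)). nra. }
  pose proof (prodP_nonneg r PI (N+3) ltac:(lra)).
  assert (0 <= (1 + cos t) * (50*r^4 - T)) by (apply Rmult_le_pos; lra).
  nra.
Qed.

Lemma exp_mono (a b : R) : a <= b -> exp a <= exp b.
Proof. intros [H|H]; [left; apply exp_increasing; auto| subst; lra]. Qed.

Lemma seq_conv (u : nat -> R) (K p : R) : 0 <= p < 1 ->
  (forall n, Rabs (u (S n) - u n) <= K * p^n) -> ex_finite_lim_seq u.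
Proof.
  intros Hp Hd.
  set (d := fun n => u (S n) - u n).
  assert (Es : ex_series d).
  { apply (ex_series_le d (fun n => K * p^n)).
    - intros n. exact (Hd n).
    - apply (ex_series_scal_l K (fun n => p^n)). apply ex_series_geom. rewrite Rabs_right; lra. }
  destruct Es as [l Hl].
  assert (Hsum : forall N, u (S N) = u O + sum_n d N).
  { induction N as [|N IH].
    - rewrite sum_O. unfold d. ring.
    - rewrite sum_Sn. unfold plus; simpl. rewrite <- Rplus_assoc, <- IH. unfold d. ring. }
  exists (u O + l).
  apply is_lim_seq_incr_1.
  apply is_lim_seq_ext with (fun N => u O + sum_n d N).
  { intros; rewrite Hsum; auto. }
  apply is_lim_seq_plus'. apply is_lim_seq_const. exact Hl.
Qed.

Lemma Cpow_diff (a b : C) (M : R) (n : nat) : 1 <= M -> Cmod a <= M -> Cmod b <= M ->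
  Cmod (Cpow a n - Cpow b n) <= INR n * M^n * Cmod (a - b).
Proof.
  intros HM Ha Hb. induction n as [|n IH].
  - simpl. replace (1 - 1)%C with (RtoC 0) by (apply injective_projections; simpl; ring).
    rewrite Cmod_0. lra.
  - simpl Cpow.
    replace (a * Cpow a n - b * Cpow b n)%C with (a * (Cpow a n - Cpow b n) + (a - b) * Cpow b n)%C by ring.
    eapply Rle_trans; [apply Cmod_triangle|].
    rewrite !Cmod_mult, Cmod_pow.
    pose proof (Cmod_ge_0 a). pose proof (Cmod_ge_0 b). pose proof (Cmod_ge_0 (a-b)).
    pose proof (Cmod_ge_0 (Cpow a n - Cpow b n)).
    assert (Cmod b ^ n <= M ^ n) by (apply pow_incr; lra).
    assert (1 <= M^n) by (apply pow_R1_Rle; lra).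
    assert (0 <= M^n) by lra.
    rewrite S_INR. simpl pow. pose proof (pos_INR n).
    assert (Cmod a * Cmod (Cpow a n - Cpow b n) <= M * (INR n * M ^ n * Cmod (a - b))).
    { apply Rmult_le_compat; auto. }
    assert (Cmod (a - b) * Cmod b ^ n <= Cmod (a-b) * (M * M^n)) by (apply Rmult_le_compat_l; nra).
    nra.
Qed.

Fixpoint prodC (q : C) (N : nat) : R :=
  match N with O => 1 | S m => prodC q m * Cmod (Cminus (RtoC 1) (Cpow q (S m))) end.

Lemma prodC_nonneg q N : 0 <= prodC q N.
Proof. induction N; simpl; [lra|]. apply Rmult_le_pos; auto. apply Cmod_ge_0. Qed.

Lemma eta_S q N : eta_partial q (S N) = Cmult (eta_partial q N) (Cpow (Cminus (RtoC 1) (Cpow q (S N))) 24).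
Proof. reflexivity. Qed.

Lemma Cpow_one n : Cpow (RtoC 1) n = RtoC 1.
Proof. induction n; [reflexivity|]. change (Cpow (RtoC 1) (S n)) with (RtoC 1 * Cpow (RtoC 1) n)%C. rewrite IHn. apply injective_projections; simpl; ring. Qed.

Lemma Cmod_eta (q : C) N : Cmod (eta_partial q N) = prodC q N ^ 24.
Proof.
  induction N as [|N IH].
  - simpl. rewrite Cmod_1. ring.
  - rewrite eta_S. simpl prodC. rewrite Cmod_mult, IH, Cmod_pow, Rpow_mult_distr. reflexivity.
Qed.

Lemma Cmod_1m (q : C) n : Cmod (Cminus (RtoC 1) (Cpow q n)) <= 1 + Cmod q ^ n.
Proof.
  unfold Cminus. eapply Rle_trans; [apply Cmod_triangle|]. rewrite Cmod_opp, Cmod_pow, Cmod_1. lra.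
Qed.

Lemma prodC_bound (q : C) N : Cmod q <= 1/2 -> prodC q N <= exp (1 - Cmod q ^ N).
Proof.
  intros Hq. pose proof (Cmod_ge_0 q) as Hq0. induction N as [|N IH].
  - simpl. rewrite Rminus_diag, exp_0. lra.
  - simpl prodC.
    pose proof (Cmod_1m q (S N)). pose proof (Cmod_ge_0 (Cminus (RtoC 1) (Cpow q (S N)))).
    pose proof (prodC_nonneg q N).
    apply Rle_trans with (exp (1 - Cmod q ^ N) * exp (Cmod q ^ S N)).
    + apply Rmult_le_compat; auto. eapply Rle_trans; [exact H|]. apply exp_ineq1_le.
    + rewrite <- exp_plus. apply exp_mono. simpl pow.
      assert (0 <= Cmod q ^ N) by (apply pow_le; lra). nra.
Qed.

Lemma fst_sub (a b : C) : fst (a - b)%C = fst a - fst b.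
Proof. destruct a, b. unfold Cminus, Cplus, Copp. simpl. ring. Qed.
Lemma snd_sub (a b : C) : snd (a - b)%C = snd a - snd b.
Proof. destruct a, b. unfold Cminus, Cplus, Copp. simpl. ring. Qed.

Lemma mul_sub (a b : C) : (a*b - a = a*(b - RtoC 1))%C.
Proof. ring. Qed.

Lemma eta_conv (q : C) : Cmod q <= 1/2 ->
  ex_finite_lim_seq (fun N => fst (eta_partial q N)) /\ ex_finite_lim_seq (fun N => snd (eta_partial q N)).
Proof.
  intros Hq. pose proof (Cmod_ge_0 q) as Hq0.
  set (K := exp 1 ^ 24 * (INR 24 * 2^24) * Cmod q).
  assert (Hd : forall n, Cmod (eta_partial q (S n) - eta_partial q n) <= K * Cmod q ^ n).
  { intro n. rewrite eta_S. change (Cpow q (S n)) with (q * Cpow q n)%C.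
    rewrite mul_sub.
    rewrite Cmod_mult, Cmod_eta.
    assert (Hm : Cmod (Cminus (RtoC 1) (q * Cpow q n)) <= 2).
    { pose proof (Cmod_1m q (S n)). change (Cpow q (S n)) with (q * Cpow q n)%C in H.
      assert (Cmod q ^ S n <= 1) by (rewrite <- (pow1 (S n)); apply pow_incr; lra).
      lra. }
    pose proof (Cpow_diff (Cminus (RtoC 1) (q * Cpow q n)) (RtoC 1) 2 24 ltac:(lra) Hm ltac:(rewrite Cmod_1; lra)) as HD.
    replace (Cminus (RtoC 1) (q * Cpow q n) - RtoC 1)%C with (- (q * Cpow q n))%C in HD by (unfold Cminus; ring).
    rewrite Cmod_opp, Cmod_mult, Cmod_pow, Cpow_one in HD.
    pose proof (prodC_bound q n Hq).
    assert (prodC q n ^ 24 <= exp 1 ^ 24).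
    { apply pow_incr. split; [apply prodC_nonneg|]. eapply Rle_trans; [exact H|]. apply exp_mono.
      assert (0 <= Cmod q ^ n) by (apply pow_le; lra). lra. }
    assert (0 <= prodC q n ^ 24) by (apply pow_le, prodC_nonneg).
    assert (0 <= Cmod (Cpow (Cminus (RtoC 1) (q * Cpow q n)) 24 - RtoC 1)) by apply Cmod_ge_0.
    apply Rle_trans with (exp 1 ^ 24 * (INR 24 * 2 ^ 24 * (Cmod q * Cmod q ^ n))).
    - apply Rmult_le_compat; assumption.
    - unfold K. right. ring. }
  split.
  - apply (seq_conv _ K (Cmod q)); [lra|]. intros n.
    eapply Rle_trans; [|apply Hd].
    eapply Rle_trans; [|apply Rmax_Cmod]. rewrite fst_sub. apply Rmax_l.
  - apply (seq_conv _ K (Cmod q)); [lra|]. intros n.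
    eapply Rle_trans; [|apply Hd].
    eapply Rle_trans; [|apply Rmax_Cmod]. rewrite snd_sub. apply Rmax_r.
Qed.

Lemma Cmod_infprod (q : C) : Cmod q <= 1/2 ->
  is_lim_seq (fun N => Cmod (eta_partial q N)) (Cmod (infprod q)).
Proof.
  intros Hq. destruct (eta_conv q Hq) as [H1 H2].
  pose proof (Lim_seq_correct' _ H1) as L1. pose proof (Lim_seq_correct' _ H2) as L2.
  destruct H1 as [l1 H1]. destruct H2 as [l2 H2].
  rewrite (is_lim_seq_unique _ _ H1) in L1. rewrite (is_lim_seq_unique _ _ H2) in L2.
  unfold infprod, Cmod. simpl fst; simpl snd.
  rewrite (is_lim_seq_unique _ _ H1), (is_lim_seq_unique _ _ H2). simpl real.
  apply is_lim_seq_continuous.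
  - apply continuity_pt_sqrt. nra.
  - apply is_lim_seq_plus'; simpl pow; (apply is_lim_seq_mult'; [auto| apply is_lim_seq_mult'; [auto|apply is_lim_seq_const]]).
Qed.

Lemma qvar_eq (x B : R) : qvar (x, B) = (exp (-(2*PI*B)) * cos (2*PI*x), exp (-(2*PI*B)) * sin (2*PI*x)).
Proof.
  unfold qvar, cexp.
  assert (E1 : Re (Cmult (RtoC (2 * PI)) (Cmult Ci (x, B))) = -(2*PI*B)) by (unfold Re, Cmult, Ci, RtoC; simpl; ring).
  assert (E2 : Im (Cmult (RtoC (2 * PI)) (Cmult Ci (x, B))) = 2*PI*x) by (unfold Im, Cmult, Ci, RtoC; simpl; ring).
  rewrite E1, E2. reflexivity.
Qed.

Lemma Cmod_polar (r t : R) : 0 <= r -> Cmod (r * cos t, r * sin t) = r.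
Proof.
  intros Hr. unfold Cmod. simpl fst; simpl snd.
  replace ((r * cos t)^2 + (r * sin t)^2) with (r^2) by (pose proof (sin2_cos2 t); unfold Rsqr in *; nra).
  apply sqrt_pow2; auto.
Qed.

Lemma Cpow_polar (r t : R) (n : nat) :
  Cpow (r * cos t, r * sin t) n = (r^n * cos (INR n * t), r^n * sin (INR n * t)).
Proof.
  induction n as [|n IH].
  - simpl. rewrite Rmult_0_l, cos_0, sin_0. apply injective_projections; simpl; ring.
  - change (Cpow (r * cos t, r * sin t) (S n)) with (Cmult (r * cos t, r * sin t) (Cpow (r * cos t, r * sin t) n)).
    rewrite IH. rewrite S_INR. replace ((INR n + 1) * t) with (t + INR n * t) by ring.
    rewrite cos_plus, sin_plus. unfold Cmult. apply injective_projections; simpl; ring.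
Qed.

Lemma Cmod_sq (z : C) : Cmod z ^ 2 = fst z ^ 2 + snd z ^ 2.
Proof. unfold Cmod. apply pow2_sqrt. pose proof (pow2_ge_0 (fst z)). pose proof (pow2_ge_0 (snd z)). lra. Qed.

Lemma Cmod_1m_sq (r t : R) (n : nat) :
  Cmod (Cminus (RtoC 1) (Cpow (r * cos t, r * sin t) n)) ^ 2 = Pn r t n.
Proof.
  rewrite Cmod_sq, fst_sub, snd_sub, Cpow_polar. unfold Pn. simpl fst; simpl snd.
  rewrite pow2n. pose proof (sin2_cos2 (INR n * t)). unfold Rsqr in H.
  replace ((1 - r ^ n * cos (INR n * t)) ^ 2 + (0 - r ^ n * sin (INR n * t)) ^ 2)
    with (1 - 2 * r^n * cos (INR n * t) + r^n * r^n * (sin (INR n * t) * sin (INR n * t) + cos (INR n * t) * cos (INR n * t))) by ring.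
  rewrite H. ring.
Qed.

Lemma prodC_sq (r t : R) N : prodC (r * cos t, r * sin t) N ^ 2 = prodP r t N.
Proof.
  induction N as [|N IH].
  - simpl. ring.
  - change (prodC (r * cos t, r * sin t) (S N)) with (prodC (r * cos t, r * sin t) N * Cmod (Cminus (RtoC 1) (Cpow (r * cos t, r * sin t) (S N)))).
    change (prodP r t (S N)) with (prodP r t N * Pn r t (S N)).
    rewrite Rpow_mult_distr, IH, Cmod_1m_sq. reflexivity.
Qed.

Theorem mainTheorem6 (B : R) (hB : 287 / 1000 <= B) :
  (forall x : R, -(1/2) <= x <= 1/2 ->
     Cmod (modDelta (x, B)) <= Cmod (modDelta (1/2, B))) /\
  Cmod (modDelta (-(1/2), B)) = Cmod (modDelta (1/2, B)).
Proof.
  pose proof (r_bound B hB) as Hr.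
  set (r := exp (-(2*PI*B))) in *.
  split.
  - intros x _.
    unfold modDelta. rewrite !qvar_eq. fold r.
    replace (2 * PI * (1/2)) with PI by field.
    set (qx := (r * cos (2*PI*x), r * sin (2*PI*x))).
    set (qh := (r * cos PI, r * sin PI)).
    assert (Hx : Cmod qx = r) by (apply Cmod_polar; lra).
    assert (Hh : Cmod qh = r) by (apply Cmod_polar; lra).
    rewrite !Cmod_mult, Hx, Hh.
    apply Rmult_le_compat_l; [lra|].
    pose proof (Cmod_infprod qx ltac:(lra)) as Lx.
    pose proof (Cmod_infprod qh ltac:(lra)) as Lh.
    apply (is_lim_seq_incr_n _ 3) in Lx. apply (is_lim_seq_incr_n _ 3) in Lh.
    assert (Hle : forall N, Cmod (eta_partial qx (N + 3)) <= Cmod (eta_partial qh (N + 3))).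
    { intro N. rewrite !Cmod_eta. apply pow_incr. split; [apply prodC_nonneg|].
      pose proof (prod_le r (2*PI*x) Hr N) as P.
      unfold qx, qh. rewrite <- !prodC_sq in P.
      pose proof (prodC_nonneg (r * cos (2*PI*x), r * sin (2*PI*x)) (N+3)).
      pose proof (prodC_nonneg (r * cos PI, r * sin PI) (N+3)).
      nra. }
    pose proof (is_lim_seq_le _ _ _ _ Hle Lx Lh). simpl in H. exact H.
  - unfold modDelta. rewrite !qvar_eq.
    replace (2 * PI * -(1/2)) with (- PI) by field.
    replace (2 * PI * (1/2)) with PI by field.
    rewrite cos_neg, sin_neg, sin_PI, Ropp_0. reflexivity.
Qed.
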